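(* An uncountable separable metrizable space $X$ is a Lusin set if and only if $t(K)=\omega$ for every compact subset $K$ of $Q_p(X,\mathbb{R})$.
   Context: A function $f:X\to\mathbb{R}$ is quasicontinuous if for every $x\in X$, every open $V\ni f(x)$ and every open $U\ni x$ there is a nonempty open $W\subseteq U$ with $f(W)\subseteq V$. $Q_p(X,\mathbb{R})$ is the set of all quasicontinuous real-valued functions on $X$ with the topology of pointwise convergence. A separable metrizable space $X$ is a Lusin set ($\aleph_1$-Lusin set) if $X$ is uncountable and $X\cap M$ is countable for every meager subset $M$ of $X$. $t(K)=\omega$ means: for every $z\in K$ and $A\subseteq K$ with $z\in\overline{A}$ there is a countable $B\subseteq A$ with $z\in\overline{B}$. *)

(* Defs.v *)
From HB Require Import structures.
From mathcomp Require Import all_boot all_order all_algebra.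
From mathcomp Require Import all_classical all_reals topology function_spaces.
Set Implicit Arguments. Unset Strict Implicit. Unset Printing Implicit Defensive.
Import Order.TTheory GRing.Theory Num.Theory.
Local Open Scope classical_set_scope.

Definition nowhere_dense (T : topologicalType) (S : set T) :=
  (closure S)° = set0.

Definition meager (T : topologicalType) (M : set T) :=
  exists F : nat -> set T, (forall n, nowhere_dense (F n)) /\ M `<=` \bigcup_n F n.

Definition separable_space (T : topologicalType) :=
  exists D : set T, countable D /\ dense D.

(* Lusin set: X uncountable and every meager subset of X is countable
   (equivalently X ∩ M countable for every meager M ⊆ X). *)
Definition Lusin_set (T : topologicalType) :=
  ~ countable [set: T] /\ forall M : set T, meager M -> countable M.

Definition quasicontinuous (X Y : topologicalType) (f : X -> Y) :=
  forall (x : X) (V : set Y) (U : set X), open V -> V (f x) -> open U -> U x ->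
    exists W : set X, [/\ open W, W !=set0, W `<=` U & f @` W `<=` V].

(* Countable tightness t(K) = omega of a subset K of a topological space,
   closures taken in the ambient space (for z in K this coincides with the
   closure in the subspace K). *)
Definition countable_tightness (T : topologicalType) (K : set T) :=
  forall z : T, K z -> forall A : set T, A `<=` K -> closure A z ->
    exists B : set T, [/\ B `<=` A, countable B & closure B z].

(* Main.v *)
Require Import Defs.
From HB Require Import structures.
From mathcomp Require Import all_boot all_order all_algebra.
From mathcomp Require Import all_classical all_reals topology function_spaces.
From mathcomp Require Import lra.
Import Order.TTheory GRing.Theory Num.Theory.
Local Open Scope classical_set_scope.
Local Open Scope ring_scope.

Lemma countableU T (A B : set T) : countable A -> countable B -> countable (A `|` B).
Proof.
move=> cA cB.
have : countable (\bigcup_(b in [set: bool]) (if b then A else B)).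
  by apply: bigcup_countable => // -[].
apply: sub_countable; apply: subset_card_le => x [Ax|Bx].
  by exists true.
by exists false.
Qed.

Lemma enum_countable T (x0 : T) (A : set T) : countable A ->
  exists e : nat -> T, A `<=` range e.
Proof.
move=> /countable_injP[f injf].
pose e n := match pselect (exists x, A x /\ f x = n) with
  | left h => projT1 (cid h) | right _ => x0 end.
exists e => x Ax; exists (f x) => //.
rewrite /e; case: pselect => [h|]; last by move=> []; exists x.
case: (cid h) => y [Ay fy] /=.
by apply: injf; rewrite ?inE.
Qed.

Lemma small_inv {R : realType} (e : R) : 0 < e -> exists n : nat, n.+1%:R^-1 < e.
Proof.
move=> e0.
have ie : 0 <= e^-1 by rewrite invr_ge0 ltW.
have := archi_boundP ie.
set n := Num.Def.archi_bound _ => hn.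
exists n.
rewrite -[e]invrK ltf_pV2 ?posrE ?invr_gt0 //.
by apply: (lt_le_trans hn); rewrite ler_nat.
Qed.

Section Metric.
Variables (R : realType) (X : metricType R).

Lemma ball_openX (x : X) r : open (ball x r).
Proof.
rewrite openE => y; rewrite ballEmdist /= => xy.
rewrite /interior; apply/nbhs_ballP; exists (r - mdist x y) => /=.
  by rewrite subr_gt0.
move=> w; rewrite !ballEmdist /= => yw.
apply: (le_lt_trans (metric_triangle x y w)).
by rewrite -ltrBrDl.
Qed.

Lemma ball_centerX (x : X) r : 0 < r -> ball x r x.
Proof. by move=> r0; rewrite ballEmdist /= mdistxx. Qed.

Lemma Ropen_ball (a e : R) : open [set y : R^o | `|a - y| < e].
Proof.
rewrite openE => y /= ay.
rewrite /interior; exists (e - `|a - y|) => /=; first by rewrite subr_gt0.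
move=> w /= yw.
apply: (le_lt_trans (ler_distD y a w)).
by rewrite -ltrBrDl.
Qed.

Lemma ptws_nbhs (z : {ptws X -> R^o}) (c : X) (e : R) : 0 < e ->
  nbhs z [set g : {ptws X -> R^o} | `|z c - g c| < e].
Proof.
move=> e0.
have := @proj_continuous X (fun _ => R^o) c z.
move=> /(_ [set y : R^o | `|z c - y| < e]).
apply.
by exists e.
Qed.

Definition discont (f : X -> R) : set X :=
  [set x | exists2 e, 0 < e & forall r, 0 < r ->
     exists y, ball x r y /\ e <= `|f y - f x|].

Lemma qc_discont_meager (f : X -> R^o) : quasicontinuous f -> meager (discont f).
Proof.
move=> qf.
pose F n := [set x | forall r, 0 < r ->
     exists y, ball x r y /\ n.+1%:R^-1 <= `|f y - f x|].
exists F; split; last first.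
  move=> x [e e0 He]; have [n hn] := @small_inv R e e0.
  exists n => // r r0; have [y [xy fy]] := He r r0.
  by exists y; split => //; apply: le_trans fy; apply: ltW.
move=> n; rewrite /nowhere_dense; apply/seteqP; split => // x /= Hx.
have /nbhs_ballP[r /= r0 Hr] := Hx.
set d := n.+1%:R^-1 : R.
have d0 : 0 < d by rewrite invr_gt0.
have Vx : [set y : R^o | `|f x - y| < d / 2] (f x).
  by rewrite /= subrr normr0 divr_gt0.
have [W [oW [w Ww] WU fWV]] := qf x [set y : R^o | `|f x - y| < d / 2]
   (ball x r) (Ropen_ball _ _) Vx
   (ball_openX _ _) (@ball_centerX x r r0).
have /Hr cw := WU _ Ww.
have [e0 [Fe0 We0]] := cw W (open_nbhs_nbhs (conj oW Ww)).
have /nbhs_ballP[rho /= rho0 Hrho] := open_nbhs_nbhs (conj oW We0).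
have [y [ey fy]] := Fe0 rho rho0.
have Wy := Hrho _ ey.
have Vy : `|f x - f y| < d / 2 by apply: fWV; exists y.
have Ve : `|f x - f e0| < d / 2 by apply: fWV; exists e0.
have : `|f y - f e0| < d.
  apply: (le_lt_trans (ler_distD (f x) _ _)).
  by rewrite [d]splitr ltrD // distrC.
by rewrite ltNge fy.
Qed.


Lemma nonempty_X : ~ countable [set: X] -> exists x0 : X, True.
Proof.
move=> nc; apply: contrapT => h; apply: nc.
have -> : [set: X] = set0.
  by apply/seteqP; split => // x _; apply: h; exists x.
exact: countable0.
Qed.

Lemma lusin_tight (sep : separable_space X) (L : Lusin_set X)
  (K : set {ptws X -> R^o}) :
  K `<=` (fun f : {ptws X -> R^o} => @quasicontinuous X R^o f) ->
  compact K -> countable_tightness K.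
Proof.
move=> KQ cK z Kz A AK clA.
have [x0 _] := nonempty_X L.1.
have [D [cD dD]] := sep.
set C := D `|` discont z.
have cC : countable C.
  by apply: countableU => //; apply: L.2; apply: qc_discont_meager; exact: KQ.
have [e He] := @enum_countable X x0 C cC.
pose N m (eps : R) := [set g : {ptws X -> R^o} |
   forall k, (k < m)%N -> `|z (e k) - g (e k)| < eps].
have nN : forall m eps, 0 < eps -> nbhs z (N m eps).
  move=> m eps eps0; elim: m => [|m IH].
    by apply: (@filterS _ _ _ setT); [move=> g _ k|exact: filterT].
  have Fz : Filter (nbhs z) by exact: nbhs_filter.
  have h := filterI IH (@ptws_nbhs z (e m) eps eps0).
  have {}h := h Fz.
  apply: (@filterS _ _ Fz _ _ _ h).
  move=> g [h1 h2] k; rewrite ltnS leq_eqVlt => /orP[/eqP -> //|].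
  exact: h1.
have : forall m, exists g, A g /\ N m m.+1%:R^-1 g.
  move=> m; have ip : 0 < m.+1%:R^-1 :> R by rewrite invr_gt0.
  have [g [Ag Ng]] := clA _ (nN m _ ip).
  by exists g.
move=> /choice[a Ha].
pose F := a @ \oo.
have FK : F K by exists 0%N => // m _; apply: AK; exact: (Ha m).1.
have [w [Kw clw]] := cK F _ FK.
have claim1 : forall k, w (e k) = z (e k).
  move=> k; apply: contrapT => neq.
  have d0 : 0 < `|z (e k) - w (e k)|.
    by rewrite normr_gt0 subr_eq0; apply/eqP => h; apply: neq.
  set dl := `|z (e k) - w (e k)| in d0 *.
  have d20 : 0 < dl / 2 by rewrite divr_gt0.
  have [n hn] := @small_inv R _ d20.
  pose M := maxn n.+1 k.+1.
  have FT : F (a @` [set m | (M <= m)%N]).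
    by exists M => // m /= Mm; exists m.
  have [_ [[m /= Mm <-] Bm]] := clw _ _ FT (@ptws_nbhs w (e k) _ d20).
  have km : (k < m)%N by apply: leq_trans Mm; rewrite /M leq_maxr.
  have nm : (n.+1 <= m.+1)%N by apply: leq_trans (leqnSn _); apply: leq_trans Mm; rewrite /M leq_maxl.
  have h1 := (Ha m).2 k km.
  have h2 : m.+1%:R^-1 <= n.+1%:R^-1 :> R.
    by rewrite lef_pV2 ?posrE ?ltr0Sn // ler_nat.
  have : dl < dl.
    rewrite {1}/dl; apply: (le_lt_trans (ler_distD (a m (e k)) _ _)).
    rewrite [X in _ < X]splitr; apply: ltrD; last by rewrite distrC.
    by apply: (lt_le_trans h1); apply: ltW; exact: (le_lt_trans h2 hn).
  by rewrite ltxx.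
have claim2 : w = z.
  apply: funext => x.
  have [Cx|nCx] := pselect (C x).
    by have [k _ <-] := He x Cx; exact: claim1.
  apply: contrapT => neq.
  have d0 : 0 < `|w x - z x|.
    by rewrite normr_gt0 subr_eq0; apply/eqP => h; apply: neq.
  set dl := `|w x - z x| in d0 *.
  have d30 : 0 < dl / 3 by rewrite divr_gt0.
  have [r [r0 Hr]] : exists r, 0 < r /\ forall y, ball x r y -> `|z y - z x| < dl / 3.
    apply: contrapT => H; apply: nCx; right; exists (dl / 3) => // r r0.
    apply: contrapT => H2; apply: H; exists r; split => // y bxy.
    rewrite ltNge; apply/negP => le; apply: H2; exists y; split => //.
  have Vx : [set y : R^o | `|w x - y| < dl / 3] (w x).
    by rewrite /= subrr normr0.
  have [W [oW W0 WU fWV]] := KQ w Kw x [set y : R^o | `|w x - y| < dl / 3]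
     (ball x r) (Ropen_ball _ _) Vx (ball_openX _ _) (@ball_centerX x r r0).
  have [d [Wd Dd]] := dD W W0 oW.
  have wd : w d = z d by have [k _ <-] := He d (or_introl Dd); exact: claim1.
  have h1 : `|w x - w d| < dl / 3 by apply: fWV; exists d.
  have h2 : `|z d - z x| < dl / 3 by apply: Hr; exact: WU.
  have : dl < dl.
    rewrite {1}/dl; apply: (le_lt_trans (ler_distD (w d) _ _)).
    rewrite wd in h1 *; apply: (lt_le_trans (ltrD h1 h2)).
    lra.
  by rewrite ltxx.
exists (range a); split.
- by move=> _ [m _ <-]; exact: (Ha m).1.
- apply: sub_countable (card_image_le _ _) _; exact: countableP.
- rewrite -claim2 => B nB.
  have FR : F (range a) by exists 0%N => // m _; exists m.
  exact: clw _ _ FR nB.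
Qed.


Lemma closure_ball_le (y : X) (r : R) x : closure (ball y r) x -> mdist y x <= r.
Proof.
move=> cl; rewrite leNgt; apply/negP => lt.
have /cl [w [bw bw']] : nbhs x (ball x (mdist y x - r)).
  by apply/nbhs_ballP; exists (mdist y x - r) => //=; rewrite subr_gt0.
move: bw bw'; rewrite !ballEmdist /= => yw xw.
have := metric_triangle y w x; rewrite (metric_sym w x).
have : mdist y w + mdist x w < mdist y x.
  by rewrite -(subrK r (mdist y x)) addrC ltrD.
by move=> h1 h2; have := le_lt_trans h2 h1; rewrite ltxx.
Qed.

Lemma ball_sub_ball (s : X) (r r' : R) : r <= r' -> ball s r `<=` ball s r'.
Proof. by move=> rr x; rewrite !ballEmdist /= => h; apply: lt_le_trans rr. Qed.

Lemma nbhs_ballX (x : X) (A : set X) : nbhs x A -> exists2 r, 0 < r & ball x r `<=` A.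
Proof. by move/nbhs_ballP => [r /= r0 H]; exists r. Qed.

Lemma open_nbhsX (x : X) (A : set X) : open A -> A x -> exists2 r, 0 < r & ball x r `<=` A.
Proof. by move=> oA Ax; apply: nbhs_ballX; exact: open_nbhs_nbhs. Qed.

Variable S : set X.
Hypothesis ndS : (closure S)° = set0.

Definition Good (Z : set X) (c : X) (rho : R) (p : X * R * X * R) :=
  let: (y, eps, y', eps') := p in
  [/\ 0 < eps, 0 < eps', ball y eps `<=` ball c rho, ball y' eps' `<=` ball c rho &
   [/\ (forall x, closure (ball y eps) x -> ~ Z x /\ ~ closure S x),
      (forall x, closure (ball y' eps') x -> ~ Z x /\ ~ closure S x) &
      (forall x, ball y eps x -> ~ ball y' eps' x)]].

Lemma not_in_clS (U : set X) : open U -> U !=set0 -> exists y, U y /\ ~ closure S y.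
Proof.
move=> oU [u Uu]; apply: contrapT => H.
have : (closure S)° u.
  apply: (@filterS _ _ _ U); last exact: open_nbhs_nbhs.
  move=> y Uy; apply: contrapT => ncl; apply: H; by exists y.
by rewrite ndS.
Qed.

Lemma step_exists (Z : set X) (c : X) (rho : R) :
  closed Z -> (forall x, Z x -> ~ closure S x) -> 0 < rho ->
  (exists s, S s /\ ball c rho s) -> exists p, Good Z c rho p.
Proof.
move=> cZ ZS rho0 [s [Ss bs]].
have nZs : ~ Z s by move=> Zs; apply: (ZS s Zs); exact: subset_closure.
have [r1 r10 H1] := @open_nbhsX s _ (closed_openC cZ) nZs.
have [r2 r20 H2] := @open_nbhsX s _ (ball_openX c rho) bs.
pose r3 := Num.min r1 r2.
have r30 : 0 < r3 by rewrite lt_min r10 r20.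
pose G := ball s r3 `&` ~` closure S.
have oG : open G by apply: openI; [exact: ball_openX|apply: closed_openC; exact: closed_closure].
have [y [by0 ny]] := @not_in_clS _ (ball_openX s r3) (ex_intro _ s (@ball_centerX s r3 r30)).
have ys : y != s by apply/eqP => ys; apply: ny; rewrite ys; exact: subset_closure.
have dl0 : 0 < mdist s y by rewrite mdist_gt0 eq_sym.
pose r4 := Num.min r3 (mdist s y).
have r40 : 0 < r4 by rewrite lt_min r30 dl0.
have [y' [by' ny']] := @not_in_clS _ (ball_openX s r4) (ex_intro _ s (@ball_centerX s r4 r40)).
have yy' : y != y'.
  apply/eqP => e; move: by'; rewrite -e ballEmdist /= lt_min => /andP[_].
  by rewrite ltxx.
have g0 : 0 < mdist y y' by rewrite mdist_gt0.
have Gy : G y by split.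
have Gy' : G y' by split => //; apply: ball_sub_ball by'; rewrite ge_min lexx.
have [n1 n10 Hn1] := @open_nbhsX y G oG Gy.
have [n2 n20 Hn2] := @open_nbhsX y' G oG Gy'.
pose eps := Num.min n1 (mdist y y' / 4) / 2.
pose eps' := Num.min n2 (mdist y y' / 4) / 2.
have eps0 : 0 < eps by rewrite divr_gt0 // lt_min n10 divr_gt0.
have eps0' : 0 < eps' by rewrite divr_gt0 // lt_min n20 divr_gt0.
have e1 : eps < n1.
  rewrite /eps; apply: (@lt_le_trans _ _ (Num.min n1 (mdist y y' / 4))); last by rewrite ge_min lexx.
  by rewrite ltr_pdivrMr // ltr_pMr ?ltr1n // lt_min n10 divr_gt0.
have e1' : eps' < n2.
  rewrite /eps'; apply: (@lt_le_trans _ _ (Num.min n2 (mdist y y' / 4))); last by rewrite ge_min lexx.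
  by rewrite ltr_pdivrMr // ltr_pMr ?ltr1n // lt_min n20 divr_gt0.
have e2 : eps <= mdist y y' / 4.
  rewrite /eps; apply: (@le_trans _ _ (Num.min n1 (mdist y y' / 4))); last by rewrite ge_min lexx orbT.
  by rewrite ler_pdivrMr // ler_pMr ?ler1n // lt_min n10 divr_gt0.
have e2' : eps' <= mdist y y' / 4.
  rewrite /eps'; apply: (@le_trans _ _ (Num.min n2 (mdist y y' / 4))); last by rewrite ge_min lexx orbT.
  by rewrite ler_pdivrMr // ler_pMr ?ler1n // lt_min n20 divr_gt0.
have GZ : forall x, G x -> ~ Z x /\ ~ closure S x.
  by move=> x [bx nx]; split => //; apply: H1; apply: ball_sub_ball bx; rewrite ge_min lexx.
have Gc : G `<=` ball c rho.
  by move=> x [bx _]; apply: H2; apply: ball_sub_ball bx; rewrite ge_min lexx orbT.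
exists (y, eps, y', eps'); split => //; last split.
- by move=> x bx; apply: Gc; apply: Hn1; apply: ball_sub_ball bx; exact: ltW.
- by move=> x bx; apply: Gc; apply: Hn2; apply: ball_sub_ball bx; exact: ltW.
- move=> x /closure_ball_le cx; apply: GZ; apply: Hn1.
  by rewrite ballEmdist /=; apply: le_lt_trans cx e1.
- move=> x /closure_ball_le cx; apply: GZ; apply: Hn2.
  by rewrite ballEmdist /=; apply: le_lt_trans cx e1'.
- move=> x; rewrite !ballEmdist /= => yx y'x.
  have := metric_triangle y x y'; rewrite (metric_sym x y').
  have : mdist y x + mdist y' x < mdist y y' by lra.
  by move=> h1 h2; have := le_lt_trans h2 h1; rewrite ltxx.
Qed.


Variables (e : nat -> X) (x0 : X).

Definition cen (m : nat) : X * R :=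
  match (choice.unpickle m : option (nat * nat)) with
  | Some (j, k) => (e j, k.+1%:R^-1) | None => (x0, 1) end.

Definition chooseP (Z : set X) (c : X) (rho : R) : option (X * R * X * R) :=
  match pselect (exists p, Good Z c rho p) with
  | left h => Some (projT1 (cid h)) | right _ => None end.

Definition redOf (o : option (X * R * X * R)) : set X :=
  match o with Some (y, eps, _, _) => ball y eps | None => set0 end.
Definition blueOf (o : option (X * R * X * R)) : set X :=
  match o with Some (_, _, y', eps') => ball y' eps' | None => set0 end.

Fixpoint Zs (m : nat) : set X :=
  match m with
  | 0 => set0
  | m'.+1 => let o := chooseP (Zs m') (cen m').1 (cen m').2 in
       Zs m' `|` closure (redOf o) `|` closure (blueOf o)
  end.

Definition och m := chooseP (Zs m) (cen m).1 (cen m).2.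
Definition red m := redOf (och m).
Definition blue m := blueOf (och m).

Lemma choose_good {Z c rho p} : chooseP Z c rho = Some p -> Good Z c rho p.
Proof.
rewrite /chooseP; case: pselect => // h [<-].
by case: (cid h).
Qed.

Lemma choose_some {Z c rho} : (exists p, Good Z c rho p) ->
  exists p, chooseP Z c rho = Some p.
Proof. by rewrite /chooseP; case: pselect => // h _; eexists. Qed.

Lemma red_props {m x} : red m x -> closure (red m) x /\ ~ Zs m x /\ ~ closure S x.
Proof.
rewrite /red; case E: (och m) => [[[[y eps] y' eps']]|] //= bx.
have := choose_good E; rewrite /Good => -[_ _ _ _ [H _ _]].
have cx : closure (ball y eps) x by exact: subset_closure.
by split => //; apply: H.
Qed.

Lemma blue_props {m x} : blue m x -> closure (blue m) x /\ ~ Zs m x /\ ~ closure S x.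
Proof.
rewrite /blue; case E: (och m) => [[[[y eps] y' eps']]|] //= bx.
have := choose_good E; rewrite /Good => -[_ _ _ _ [_ H _]].
have cx : closure (ball y' eps') x by exact: subset_closure.
by split => //; apply: H.
Qed.

Lemma Zs_inv m : closed (Zs m) /\ forall x, Zs m x -> ~ closure S x.
Proof.
elim: m => [|m [cZ ZS]] /=.
  by split => //; exact: closed0.
set o := chooseP _ _ _.
have Eo : o = och m by [].
split.
  by apply: closedU; [apply: closedU => //|]; exact: closed_closure.
move=> x [[Zx|]|].
- exact: ZS.
- rewrite Eo; case E: (och m) => [[[[y eps] y' eps']]|] /=; last by rewrite closure0.
  by have := choose_good E; rewrite /Good => -[_ _ _ _ [H _ _]] /H [].
- rewrite Eo; case E: (och m) => [[[[y eps] y' eps']]|] /=; last by rewrite closure0.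
  by have := choose_good E; rewrite /Good => -[_ _ _ _ [_ H _]] /H [].
Qed.

Lemma Zs_mono {m n} : (m <= n)%N -> Zs m `<=` Zs n.
Proof.
move=> mn; elim: n mn => [|n IH]; first by rewrite leqn0 => /eqP mn; rewrite mn.
rewrite leq_eqVlt => /orP[/eqP mn'|]; first by rewrite mn'.
rewrite ltnS => mn x Zx.
by left; left; exact: IH.
Qed.

Lemma red_sub m : red m `<=` Zs m.+1.
Proof. by move=> x rx /=; left; right; exact: subset_closure. Qed.

Lemma blue_sub m : blue m `<=` Zs m.+1.
Proof. by move=> x rx /=; right; exact: subset_closure. Qed.

Lemma red_blue_disj m m' x : red m x -> blue m' x -> False.
Proof.
move=> rx bx.
have [mm'|m'm|eqm] := ltngtP m m'.
- have [_ [nZ _]] := blue_props bx; apply: nZ.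
  by apply: (Zs_mono mm'); exact: red_sub rx.
- have [_ [nZ _]] := red_props rx; apply: nZ.
  by apply: (Zs_mono m'm); exact: blue_sub bx.
- rewrite -eqm in bx; move: rx bx; rewrite /red /blue; case E: (och m) => [[[[y eps] y' eps']]|] //=.
  by have := choose_good E; rewrite /Good => -[_ _ _ _ [_ _ H]]; apply: H.
Qed.

Hypothesis dD : dense [set e n | n in [set: nat]].

Lemma near_S s r : S s -> 0 < r -> exists m,
  [/\ red m !=set0, red m `<=` ball s r, blue m !=set0 & blue m `<=` ball s r].
Proof.
move=> Ss r0.
have r20 : 0 < r / 2 by rewrite divr_gt0.
have [k hk] := @small_inv R _ r20.
have k0 : 0 < k.+1%:R^-1 :> R by rewrite invr_gt0.
have [d [bd [j _ ejd]]] := dD (ball s k.+1%:R^-1) (ex_intro _ s (@ball_centerX s _ k0)) (ball_openX s k.+1%:R^-1).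
pose m := choice.pickle (j, k).
have cm : cen m = (e j, k.+1%:R^-1) by rewrite /cen /m choice.pickleK.
have bs : ball (e j) k.+1%:R^-1 s.
  by move: bd; rewrite ejd !ballEmdist /= metric_sym.
have [cZ ZS] := Zs_inv m.
have [p Ep] := choose_some (@step_exists (Zs m) (e j) _ cZ ZS k0 (ex_intro _ s (conj Ss bs))).
have {}Ep : och m = Some p by rewrite /och cm.
have sub : ball (e j) k.+1%:R^-1 `<=` ball s r.
  move=> x; rewrite !ballEmdist /= => h.
  apply: (le_lt_trans (metric_triangle s (e j) x)).
  move: bd; rewrite ballEmdist /= -ejd => h'.
  by rewrite [r]splitr; apply: ltrD; apply: lt_trans hk.
exists m; rewrite /red /blue Ep /=; move: Ep; case: p => [[[y eps] y' eps']] Ep.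
have := choose_good Ep; rewrite cm /Good => -[ep ep' s1 s2 _].
split.
- by exists y; exact: (@ball_centerX y _ ep).
- by move=> x /s1; exact: sub.
- by exists y'; exact: (@ball_centerX y' _ ep').
- by move=> x /s2; exact: sub.
Qed.


End Metric.

Section Bad.
Variables (R : realType) (X : metricType R).
Variables (S Q Bl : set X).
Hypotheses (oQ : open Q) (oB : open Bl) (QB : forall x, Q x -> Bl x -> False)
  (QS : forall x, Q x -> ~ S x) (SQ : S `<=` closure Q) (SB : S `<=` closure Bl)
  (ncS : ~ countable S).

Let h (x : X) : R := if pselect (closure Q x) then 0 else 1.
Let Aset (x : X) : set R^o := if pselect (S x) then [set 0] `|` [set 1] else [set h x].
Let K := [set f : {ptws X -> R^o} | forall x, Aset x (f x)].

Let hS x : S x -> h x = 0.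
Proof. by move=> Sx; rewrite /h; case: pselect => // nQ; exfalso; apply: nQ; exact: SQ. Qed.

Let hnS x : ~ closure Q x -> h x = 1.
Proof. by rewrite /h; case: pselect. Qed.

Let hQ x : closure Q x -> h x = 0.
Proof. by rewrite /h; case: pselect. Qed.

Let Kval {f : {ptws X -> R^o}} x : K f -> (S x -> f x = 0 \/ f x = 1) /\ (~ S x -> f x = h x).
Proof.
move=> /(_ x); rewrite /Aset; case: pselect => Sx.
  by move=> [->|->]; split => //; [left|right].
by move=> ->.
Qed.

Let BnclQ x : Bl x -> ~ closure Q x.
Proof.
move=> Bx cQ; have [y [Qy By]] := cQ Bl (open_nbhs_nbhs (conj oB Bx)).
exact: (QB _ Qy By).
Qed.

Let KC : compact K.
Proof.
apply: (@tychonoff X (fun _ => R^o) Aset) => x.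
rewrite /Aset; case: pselect => Sx; last exact: compact_set1.
by apply: compactU; exact: compact_set1.
Qed.

Let KQC : K `<=` (fun f : {ptws X -> R^o} => @quasicontinuous X R^o f).
Proof.
move=> f Kf x V U oV Vfx oU Ux.
have [cQx|ncQx] := pselect (closure Q x).
  have [[Sx fx1]|nS] := pselect (S x /\ f x = 1).
    have [y [By Uy]] := SB _ Sx U (open_nbhs_nbhs (conj oU Ux)).
    exists (U `&` Bl); split.
    - exact: openI.
    - by exists y.
    - by move=> ? [].
    - move=> _ [w [Uw Bw] <-].
      have nS : ~ S w by move=> Sw; apply: (BnclQ _ Bw); exact: SQ.
      by rewrite (Kval w Kf).2 // hnS; [rewrite -fx1 | exact: BnclQ].
  have fx0 : f x = 0.
    have [Sx|nSx] := pselect (S x).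
      by case: (Kval x Kf).1 => // fx1; exfalso; apply: nS.
    by rewrite (Kval x Kf).2 // hQ.
  have [y [Qy Uy]] := cQx U (open_nbhs_nbhs (conj oU Ux)).
  exists (U `&` Q); split.
  - exact: openI.
  - by exists y.
  - by move=> ? [].
  - move=> _ [w [Uw Qw] <-].
    rewrite (Kval w Kf).2; last exact: QS.
    have cw : closure Q w by exact: subset_closure.
    by rewrite hQ // -fx0.
have nSx : ~ S x by move=> Sx; apply: ncQx; exact: SQ.
have fx1 : f x = 1 by rewrite (Kval x Kf).2 // hnS.
exists (U `&` ~` closure Q); split.
- by apply: openI => //; apply: closed_openC; exact: closed_closure.
- by exists x.
- by move=> ? [].
- move=> _ [w [Uw nQw] <-].
  have nS : ~ S w by move=> Sw; apply: nQw; exact: SQ.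
  by rewrite (Kval w Kf).2 // hnS // -fx1.
Qed.

Let z : {ptws X -> R^o} := fun x => if pselect (S x) then 1 else h x.

Let Kz : K z.
Proof. by move=> x; rewrite /z /Aset; case: pselect => Sx //; right. Qed.

Let A' := [set f : {ptws X -> R^o} | K f /\ finite_set [set x | S x /\ f x = 1]].

Let G := [set P : set {ptws X -> R^o} | exists2 Fs : set X, finite_set Fs &
   forall f, K f -> (forall x, Fs x -> f x = z x) -> P f].

Let FG : Filter G.
Proof.
split.
- by exists set0.
- move=> P P' [F1 fF1 H1] [F2 fF2 H2]; exists (F1 `|` F2).
    by rewrite finite_setU.
  by move=> f Kf Hf; split; [apply: H1 | apply: H2] => // x Fx; apply: Hf; [left|right].
- move=> P P' PP' [F1 fF1 H1]; exists F1 => // f Kf Hf; apply: PP'; exact: H1.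
Qed.

Let clA' : closure A' z.
Proof.
have Gz : {ptws, G --> z}.
  apply/(pointwise_cvgP z FG) => t B nB.
  exists [set t]; first exact: finite_set1.
  move=> f Kf Hf /=; rewrite Hf //; exact: nbhs_singleton.
move=> N nN; have [Fs fFs HF] := Gz N nN.
pose fT : {ptws X -> R^o} := fun x => if pselect (S x /\ Fs x) then 1 else h x.
have KfT : K fT.
  move=> x; rewrite /fT /Aset; case: (pselect (S x /\ Fs x)) => [[Sx Fx0]|nSF].
    by case: (pselect (S x)) => // Sx0; right.
  case: (pselect (S x)) => Sx //; left; by rewrite hS.
have agree : forall x, Fs x -> fT x = z x.
  move=> x Fx; rewrite /fT /z; case: (pselect (S x /\ Fs x)) => [[Sx Fx0]|nSF].
    by case: (pselect (S x)).
  by case: (pselect (S x)) => // Sx; exfalso; apply: nSF.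
exists fT; split; last exact: HF.
split => //; apply: sub_finite_set fFs => x [Sx].
rewrite /fT; case: (pselect (S x /\ Fs x)) => [[Sx1 Fx1 //]|nSF].
by rewrite hS // => /eqP; rewrite eq_sym oner_eq0.
Qed.

Lemma bad_tight : ~ countable_tightness K.
Proof.
move=> CT.
have [B [BA cB clB]] := CT z Kz A' (fun f (Hf : A' f) => Hf.1) clA'.
pose Un := \bigcup_(b in B) [set x | S x /\ b x = 1].
have cUn : countable Un.
  apply: bigcup_countable => // b Bb; apply: finite_set_countable.
  exact: (BA b Bb).2.
have [s [Ss nUs]] : exists s, S s /\ ~ Un s.
  apply: contrapT => H; apply: ncS; apply: sub_countable cUn.
  apply: subset_card_le => s Ss; apply: contrapT => nU; apply: H; by exists s.
have h20 : 0 < 1 / 2 :> R by rewrite divr_gt0.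
have [b [Bb Nb]] := clB _ (@ptws_nbhs R X z s _ h20).
have Kb := (BA b Bb).1.
have bs0 : b s = 0.
  case: (Kval s Kb).1 => // bs1; exfalso; apply: nUs; by exists b.
move: Nb; rewrite /= bs0 /z; case: (pselect (S s)) => // Ss0.
rewrite /= subr0 normr1 => h1; lra.

Qed.

Lemma bad_exists : exists K : set {ptws X -> R^o},
  [/\ K `<=` (fun f : {ptws X -> R^o} => @quasicontinuous X R^o f),
      compact K & ~ countable_tightness K].
Proof. by exists K; split; [exact: KQC|exact: KC|exact: bad_tight]. Qed.

End Bad.

Lemma red_open (R : realType) (X : metricType R) S e x0 m : open (@red R X S e x0 m).
Proof.
rewrite /red; case: (och _ _ _ _ _) => [[[[y eps] y' eps']]|] /=.
  exact: ball_openX.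
exact: open0.
Qed.

Lemma blue_open (R : realType) (X : metricType R) S e x0 m : open (@blue R X S e x0 m).
Proof.
rewrite /blue; case: (och _ _ _ _ _) => [[[[y eps] y' eps']]|] /=.
  exact: ball_openX.
exact: open0.
Qed.

Local Close Scope ring_scope.

Theorem corollary5p2 (R : realType) (X : metricType R) :
  separable_space X -> ~ countable [set: X] ->
  (Lusin_set X <->
   forall K : set {ptws X -> R^o},
     K `<=` (fun f : {ptws X -> R^o} => @quasicontinuous X R^o f) ->
     compact K -> countable_tightness K).
Proof.
move=> sep ncX; split.
  by move=> L K KQ cK; exact: (@lusin_tight R X sep L K KQ cK).
move=> RHS; split => // M [F [ndF MF]]; apply: contrapT => ncM.
have [n ncS] : exists n, ~ countable (M `&` F n).
  apply: contrapT => H; apply: ncM.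
  have : countable (\bigcup_(n in [set: nat]) (M `&` F n)).
    apply: bigcup_countable => // n _; apply: contrapT => h; apply: H; by exists n.
  apply: sub_countable; apply: subset_card_le => x Mx.
  by have [k _ Fx] := MF x Mx; exists k.
set S := M `&` F n.
have ndS : (closure S)° = set0.
  apply/seteqP; split => // x Hx; rewrite -(ndF n).
  by apply: (interiorS (closure_subset (@subIsetr _ _ _))) Hx.
have [x0 _] := @nonempty_X R X ncX.
have [D [cD dD]] := sep.
have [e He] := @enum_countable X x0 D cD.
have dE : dense (range e).
  move=> O O0 oO; have [d [Od Dd]] := dD O O0 oO; exists d; split => //; exact: He.
pose Q := \bigcup_(m in [set: nat]) @red R X S e x0 m.
pose Bl := \bigcup_(m in [set: nat]) @blue R X S e x0 m.
have oQ : open Q by apply: bigcup_open => m _; exact: red_open.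
have oB : open Bl by apply: bigcup_open => m _; exact: blue_open.
have QB : forall x, Q x -> Bl x -> False.
  by move=> x [m _ rx] [m' _ bx]; exact: (@red_blue_disj R X S e x0 m m' x rx bx).
have QS : forall x, Q x -> ~ S x.
  move=> x [m _ rx] Sx; have [_ [_ ncl]] := @red_props R X S e x0 _ _ rx.
  by apply: ncl; exact: subset_closure.
have SQ : S `<=` closure Q.
  move=> s Ss B /nbhs_ballX [r r0 Hr].
  have [m [[y ry] sub _ _]] := @near_S R X S ndS e x0 dE s r Ss r0.
  by exists y; split; [exists m|apply: Hr; apply: sub].
have SB : S `<=` closure Bl.
  move=> s Ss B /nbhs_ballX [r r0 Hr].
  have [m [_ _ [y ry] sub]] := @near_S R X S ndS e x0 dE s r Ss r0.
  by exists y; split; [exists m|apply: Hr; apply: sub].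
have [K [KQ cK nT]] := @bad_exists R X S Q Bl oQ oB QB QS SQ SB ncS.
by apply: nT; exact: RHS.
Qed.
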